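(* Let $W$ be a binary symmetric channel (equivalently, a symmetric binary-input channel with $S_1=0$ self-symmetric and $S_2=2$ non-self-symmetric output symbols), $N=2^n$, and let $a$ be a power of $2$ with $a\le N/2$. For $i=N-a$, the number $n_c(N,i,0,2)$ of distinct values of $W_N^{(i)}(\mathbf{y})$ as $\mathbf{y}$ ranges over $\mathbb{F}_2^N$ equals $$n_c(N,i,0,2)=\binom{a+\frac{N}{2a}}{\frac{N}{2a}}.$$
   Context: $G_N=F^{\otimes n}$ with $F=\begin{pmatrix}1&0\\1&1\end{pmatrix}$ over $\mathbb{F}_2$; $A(N,i)$ is the submatrix of rows $i+1,\dots,N$ of $G_N$. For a BSC with crossover probability $p$, $W^N(\mathbf{y}|\mathbf{x})=\prod_j W(y_j|x_j)$, and $W_N^{(i)}(\mathbf{y})=\frac{1}{2^{N-1}}\sum_{\mathbf{c}\in\mathrm{row}(A(N,i))}W^N(\mathbf{y}|\mathbf{c})$. *)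

(* Defs.v *)
From mathcomp Require Import all_boot all_order all_algebra.
From mathcomp Require Import mxtens.
Set Implicit Arguments. Unset Strict Implicit. Unset Printing Implicit Defensive.
Import Order.TTheory GRing.Theory Num.Theory.
Local Open Scope ring_scope.

Definition Fker : 'M['F_2]_2 := \matrix_(i < 2, j < 2) (if (j <= i)%N then 1 else 0).

Fixpoint Gpolar (n : nat) : 'M['F_2]_(2 ^ n) :=
  match n return 'M['F_2]_(2 ^ n) with
  | 0 => 1%:M
  | n'.+1 => castmx (esym (expnS 2 n'), esym (expnS 2 n')) (Fker *t Gpolar n')
  end.

(* A(N,i): rows i+1,...,N (1-indexed) of G_N, i.e. rows i,...,N-1 (0-indexed). *)
Lemma Asub_idx_proof (N i : nat) (k : 'I_(N - i)) : (i + k < N)%N.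
Proof. by case: k => k /= Hk; rewrite -ltn_subRL. Qed.

Definition Asub_idx (N i : nat) (k : 'I_(N - i)) : 'I_N :=
  Ordinal (Asub_idx_proof k).

Definition Asub (n i : nat) : 'M['F_2]_(2 ^ n - i, 2 ^ n) :=
  \matrix_(k < 2 ^ n - i, j < 2 ^ n) Gpolar n (Asub_idx k) j.

(* BSC transition probability W(y|x) with crossover probability p, where p
   is kept as a formal indeterminate: an element of {poly rat} in 'X = p. *)
Definition Wbsc (y x : 'F_2) : {poly rat} := if y == x then 1 - 'X else 'X.

Definition WN (N : nat) (y c : 'rV['F_2]_N) : {poly rat} :=
  \prod_(j < N) Wbsc (y ord0 j) (c ord0 j).

Definition Wsplit (n i : nat) (y : 'rV['F_2]_(2 ^ n)) : {poly rat} :=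
  ((2 ^ (2 ^ n - 1))%:R : rat)^-1 *:
    \sum_(c : 'rV['F_2]_(2 ^ n) | (c <= Asub n i)%MS) WN y c.

Arguments Wsplit : clear implicits.

Definition nc (n i : nat) : nat :=
  size (undup [seq Wsplit n i y | y <- enum 'rV['F_2]_(2 ^ n)]).

(* Main.v *)
Require Import Defs.
From mathcomp Require Import all_boot all_order all_algebra.
Set Warnings "-notation-overridden -ambiguous-paths".
From mathcomp Require Import mxtens.
From mathcomp Require Import zify ring lra.
Set Implicit Arguments. Unset Strict Implicit. Unset Printing Implicit Defensive.
Import Order.TTheory GRing.Theory Num.Theory.
Local Open Scope ring_scope.


Definition QP (D : seq nat) : {poly rat} := \prod_(d <- D) (1 + 'X^d).

Lemma QP_coef0 D : (QP D)`_0 = (2 ^ count_mem 0%N D)%:R.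
Proof.
elim: D => [|d D IH]; rewrite /QP ?big_nil ?big_cons ?coef1 //=.
rewrite coef0M -/(QP D) IH coefD coef1 coefXn.
case: d => [|d] /=; last by rewrite add0n addr0 mul1r.
by rewrite add1n expnS natrM.
Qed.

Lemma QP_coefd D (d0 : nat) : (0 < d0)%N -> all (fun d => d0 <= d)%N D ->
  (QP D)`_d0 = (count_mem d0 D)%:R.
Proof.
move=> d0p; elim: D => [|d D IH]; rewrite /QP ?big_nil ?big_cons ?coef1 /=.
  by case: d0 d0p.
case/andP=> hd hD; rewrite -/(QP D) mulrDl mul1r coefD IH // coefXnM.
case: ltngtP hd => // [hlt|->] _.
  by rewrite addr0.
rewrite subnn QP_coef0 /= (natrD _ 1) addrC.
suff -> : count_mem 0%N D = 0%N by [].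
apply/eqP; rewrite -leqn0 leqNgt -has_count; apply/hasPn => x xD.
apply/negP => /eqP x0; have := allP hD x xD; move: d0p; rewrite /= x0; lia.
Qed.

Lemma exists_min (s : seq nat) : s != [::] -> exists2 x, x \in s & all (fun y => x <= y)%N s.
Proof.
elim: s => [//|y s IH] _.
case: (eqVneq s [::]) => [->|/IH [x xs ax]]; first by exists y; rewrite /= ?inE ?eqxx ?leqnn.
case: (leqP y x) => h.
  exists y; first by rewrite inE eqxx.
  rewrite /= leqnn; apply/allP=> z zs; apply: leq_trans h _; exact: (allP ax).
exists x; first by rewrite inE xs orbT.
by rewrite /= ltnW // ax.
Qed.

Lemma QP_nz d : (1 + 'X^d : {poly rat}) != 0.
Proof.
apply/eqP=> /(congr1 (horner^~ 1)); rewrite hornerD hornerC hornerXn expr1n horner0.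
lra.
Qed.

Lemma QP_inj D E : QP D = QP E -> perm_eq D E.
Proof.
move: {2}(size D + size E)%N (leqnn (size D + size E)) => K.
elim: K D E => [|K IH] D E.
  by case: D => [|//]; case: E => [|//].
move=> hs hQ.
case: (eqVneq (D ++ E) [::]) => [|ne].
  by case: D hs hQ => [|//]; case: E => [|//].
have [x xDE ax] := exists_min ne.
rewrite all_cat in ax; case/andP: ax => axD axE.
have hc : count_mem x D = count_mem x E.
  case: x xDE axD axE => [|x] xDE axD axE.
    have := QP_coef0 D; rewrite hQ QP_coef0 => /eqP; rewrite eqr_nat => /eqP.
    by move/(expnI (isT : (1 < 2)%N)) ->.
  have := QP_coefd (isT : (0 < x.+1)%N) axD.
  by rewrite hQ QP_coefd // => /eqP; rewrite eqr_nat => /eqP.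
have xD : x \in D.
  rewrite -has_pred1 has_count; move: xDE; rewrite mem_cat -!has_pred1 !has_count.
  by rewrite hc orbb.
have xE : x \in E by rewrite -has_pred1 has_count -hc -has_count has_pred1.
have pD := perm_to_rem xD; have pE := perm_to_rem xE.
have : QP (rem x D) = QP (rem x E).
  apply: (mulfI (QP_nz x)).
  have eD : QP D = (1 + 'X^x) * QP (rem x D) by rewrite /QP (perm_big _ pD) big_cons.
  have eE : QP E = (1 + 'X^x) * QP (rem x E) by rewrite /QP (perm_big _ pE) big_cons.
  by rewrite -eD -eE.
move/IH => IH'.
have h' : perm_eq (rem x D) (rem x E).
  apply: IH'; move: hs; rewrite (perm_size pD) (perm_size pE) /=; lia.
apply: (perm_trans pD); rewrite perm_sym; apply: (perm_trans pE).
by rewrite perm_cons perm_sym.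
Qed.


Fixpoint bsub (n r j : nat) : bool :=
  match n with
  | 0 => true
  | n'.+1 => ((j %/ 2 ^ n' <= r %/ 2 ^ n') && bsub n' (r %% 2 ^ n') (j %% 2 ^ n'))%N
  end.

Lemma Gpolar_E n (r j : 'I_(2 ^ n)) : Gpolar n r j = (bsub n r j)%:R.
Proof.
elim: n r j => [|n IH] r j /=.
  rewrite mxE; move: r j; rewrite expn0 => r j.
  by rewrite !ord1 eqxx.
rewrite castmxE /= mxE /Fker mxE IH /=.
by case: (_ <= _)%N; rewrite ?mul1r ?mul0r.
Qed.

Lemma bsub_refl n r : bsub n r r.
Proof. by elim: n r => [|n IH] r //=; rewrite leqnn IH. Qed.

Lemma bsub_le n r j : (j < 2 ^ n)%N -> bsub n r j -> (j <= r)%N.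
Proof.
elim: n r j => [|n IH] r j /=.
  by rewrite expn0 ltnS leqn0 => /eqP ->.
move=> _; case/andP=> h1 /(IH _ _ (ltn_pmod _ (expn_gt0 2 n))) h2.
rewrite (divn_eq j (2 ^ n)) (divn_eq r (2 ^ n)).
set P := (2 ^ n)%N in h1 h2 *.
set jq := (j %/ P)%N in h1 *; set rq := (r %/ P)%N in h1 *.
have : (jq * P <= rq * P)%N by rewrite leq_mul2r h1 orbT.
lia.
Qed.

Lemma bsub_top s k r j : (r < 2 ^ k)%N -> (j < 2 ^ (s + k))%N ->
  bsub (s + k) (2 ^ (s + k) - 2 ^ k + r) j = bsub k r (j %% 2 ^ k).
Proof.
move=> rk; elim: s j => [|s IH] j hj.
  by rewrite add0n subnn add0n modn_small.
rewrite addSn /=.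
set P := (2 ^ (s + k))%N; set K := (2 ^ k)%N.
have KP : (K <= P)%N by rewrite leq_pexp2l // leq_addl.
have KdP : (K %| P)%N by rewrite dvdn_exp2l // leq_addl.
have P0 : (0 < P)%N by rewrite expn_gt0.
have eR : (2 ^ (s + k).+1 - K + r = 1 * P + (P - K + r))%N.
  rewrite expnS -/P; lia.
have lt : (P - K + r < P)%N by lia.
rewrite eR divnMDl // modnMDl (divn_small lt) (modn_small lt) addn0.
have -> : (j %/ P <= 1)%N.
  by rewrite -ltnS ltn_divLR //; move: hj; rewrite addSn expnS -/P; lia.
rewrite /= IH ?ltn_pmod // modn_dvdm //.
Qed.

Definition jmod k N (j : 'I_N) : 'I_(2 ^ k) := Ordinal (ltn_pmod j (expn_gt0 2 k)).

Definition Pm s k : 'M['F_2]_(2 ^ k, 2 ^ (s + k)) :=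
  \matrix_(t, j) ((jmod k j == t)%:R).

Lemma mulPm s k (v : 'rV['F_2]_(2 ^ k)) : v *m Pm s k = \row_j v 0 (jmod k j).
Proof.
apply/rowP => j; rewrite !mxE (bigD1 (jmod k j)) //= mxE eqxx mulr1 big1 ?addr0 //.
by move=> t tj; rewrite mxE eq_sym (negbTE tj) mulr0.
Qed.

Lemma Gpolar_unit k : Gpolar k \in unitmx.
Proof.
rewrite unitmxE det_trig.
  by rewrite big1 ?unitr1 // => i _; rewrite Gpolar_E bsub_refl.
apply/is_trig_mxP => i j ij; rewrite Gpolar_E.
case h: (bsub k i j) => //; have := bsub_le (ltn_ord j) h; rewrite leqNgt ij //.
Qed.

Lemma kle s k : (2 ^ k <= 2 ^ (s + k))%N.
Proof. by rewrite leq_pexp2l // leq_addl. Qed.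

Lemma Asub_E s k : Asub (s + k) (2 ^ (s + k) - 2 ^ k) =
  castmx (esym (subKn (kle s k)), erefl) (Gpolar k *m Pm s k).
Proof.
apply/matrixP => r j; rewrite castmxE !mxE Gpolar_E /=.
rewrite (bigD1 (jmod k j)) //= mxE eqxx mulr1 big1 ?addr0; last first.
  by move=> t tj; rewrite mxE eq_sym (negbTE tj) mulr0.
rewrite Gpolar_E /= bsub_top //.
by have := ltn_ord r; move: (nat_of_ord r) => x; rewrite subKn ?kle.
Qed.

Lemma rowspaceE s k (c : 'rV['F_2]_(2 ^ (s + k))) :
  (c <= Asub (s + k) (2 ^ (s + k) - 2 ^ k))%MS = (c \in [set v *m Pm s k | v in setT]).
Proof.
rewrite Asub_E (eqmx_cast _ _) (eqmxMfull _ _); last by rewrite row_full_unit Gpolar_unit.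
apply/submxP/imsetP => [[v ->]|[v _ ->]]; by exists v.
Qed.

Lemma idx_proof s k (b : 'I_(2 ^ s)) (t : 'I_(2 ^ k)) : (b * 2 ^ k + t < 2 ^ (s + k))%N.
Proof. by rewrite expnD; exact: (mxtens_index_proof (b, t)). Qed.

Definition idx s k b t : 'I_(2 ^ (s + k)) := Ordinal (@idx_proof s k b t).

Lemma div_proof s k (j : 'I_(2 ^ (s + k))) : (j %/ 2 ^ k < 2 ^ s)%N.
Proof. by rewrite ltn_divLR ?expn_gt0 // -expnD. Qed.

Lemma jmod_idx s k b t : jmod k (@idx s k b t) = t.
Proof. by apply: val_inj => /=; rewrite modnMDl modn_small. Qed.

Lemma prod_split s k (G : 'I_(2 ^ (s + k)) -> {poly rat}) :
  \prod_j G j = \prod_(t < 2 ^ k) \prod_(b < 2 ^ s) G (@idx s k b t).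
Proof.
rewrite pair_big /= (reindex (fun p : 'I_(2 ^ k) * 'I_(2 ^ s) => @idx s k p.2 p.1)) //=.
exists (fun j => (jmod k j, Ordinal (div_proof j))) => [[t b] _|j _] /=.
  congr (_, _); apply: val_inj => /=; first by rewrite modnMDl modn_small.
  by rewrite divnMDl ?expn_gt0 // divn_small // addn0.
by apply: val_inj => /=; rewrite -divn_eq.
Qed.

Lemma F2_cases (x : 'F_2) : x = 0 \/ x = 1.
Proof. case: x => [[|[|//]]] Hx; [left|right]; exact: val_inj. Qed.

Lemma sumF2 (V : nmodType) (f : 'F_2 -> V) : \sum_(x : 'F_2) f x = f 0 + f 1.
Proof.
rewrite (bigD1 0) //= (bigD1 1) //= big1 ?addr0 // => x /andP [x1 x0].
by case: (F2_cases x) x1 x0 => ->; rewrite eqxx.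
Qed.

Definition gp (m u : nat) : {poly rat} :=
  (1 - 'X) ^+ (m - u) * 'X ^+ u + 'X ^+ (m - u) * (1 - 'X) ^+ u.

Definition w s k (y : 'rV['F_2]_(2 ^ (s + k))) (t : 'I_(2 ^ k)) : nat :=
  #|[pred b : 'I_(2 ^ s) | y 0 (@idx s k b t) == 1]|.

Lemma Hcount (T : finType) (f : T -> 'F_2) (x : 'F_2) :
  \prod_b Wbsc (f b) x = (1 - 'X) ^+ #|[pred b | f b == x]| * 'X ^+ #|[pred b | f b != x]|.
Proof.
rewrite (bigID (fun b => f b == x)) /= -!prodr_const.
congr (_ * _); apply: eq_big => // b; rewrite ?inE /Wbsc.
  by move=> ->.
by move/negbTE => ->.
Qed.

Lemma sumH (T : finType) (f : T -> 'F_2) :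
  \sum_(x : 'F_2) \prod_b Wbsc (f b) x = gp #|T| #|[pred b | f b == 1]|.
Proof.
rewrite sumF2 !Hcount /gp.
have e1 : #|[pred b | f b != 1]| = subn #|T| #|[pred b | f b == 1]|.
  by rewrite -(cardC [pred b | f b == 1]) addKn; apply: eq_card => b; rewrite !inE.
have e0 : #|[pred b | f b == 0]| = #|[pred b | f b != 1]|.
  by apply: eq_card => b; rewrite !inE; case: (F2_cases (f b)) => ->.
have e0' : #|[pred b | f b != 0]| = #|[pred b | f b == 1]|.
  by apply: eq_card => b; rewrite !inE; case: (F2_cases (f b)) => ->.
by rewrite e0 e0' e1 [X in _ + X]mulrC.
Qed.

Lemma sum_formula s k (y : 'rV['F_2]_(2 ^ (s + k))) :
  \sum_(c | (c <= Asub (s + k) (2 ^ (s + k) - 2 ^ k))%MS) WN y c =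
  \prod_(t < 2 ^ k) gp (2 ^ s) (w y t).
Proof.
rewrite (eq_bigl _ _ (@rowspaceE s k)) big_imset /=; last first.
  move=> v1 v2 _ _ e; apply/rowP => t.
  have := congr1 (fun c : 'rV_(2 ^ (s + k)) => c 0 (@idx s k (Ordinal (expn_gt0 2 s)) t)) e.
  by rewrite /= !mulPm !mxE jmod_idx.
transitivity (\sum_(v : 'rV['F_2]_(2 ^ k))
   \prod_(t < 2 ^ k) \prod_(b < 2 ^ s) Wbsc (y 0 (@idx s k b t)) (v 0 t)).
  apply: eq_big => [v|v _]; first by rewrite in_setT.
  rewrite /WN prod_split; apply: eq_bigr => t _.
  by apply: eq_bigr => b _; rewrite mulPm mxE jmod_idx.
rewrite (reindex (fun f : {ffun 'I_(2 ^ k) -> 'F_2} => \row_t f t)) /=; last first.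
  exists (fun v : 'rV_(2 ^ k) => [ffun t => v 0 t]) => [f _|v _].
    by apply/ffunP => t; rewrite ffunE mxE.
  by apply/rowP => t; rewrite !mxE ffunE.
transitivity (\sum_(f : {ffun 'I_(2 ^ k) -> 'F_2})
   \prod_(t < 2 ^ k) \prod_(b < 2 ^ s) Wbsc (y 0 (@idx s k b t)) (f t)).
  by apply: eq_bigr => f _; apply: eq_bigr => t _; rewrite mxE.
rewrite -(bigA_distr_bigA (fun t x => \prod_(b < 2 ^ s) Wbsc (y 0 (@idx s k b t)) x)).
apply: eq_bigr => t _; rewrite sumH card_ord //.
Qed.


Definition PX (m : nat) (U : seq nat) : {poly rat} :=
  \prod_(u <- U) ('X^u + 'X^(m - u)).

Lemma gp_eval m u (q : rat) : (u <= m)%N -> 0 <= q ->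
  (gp m u).[q / (1 + q)] = ((1 + q)^-1) ^+ m * (q ^+ u + q ^+ (m - u)).
Proof.
move=> um q0; set r := (1 + q)^-1.
have hr : 1 - q / (1 + q) = r.
  rewrite /r; field; lra.
rewrite /gp !(hornerE, hornerXn) hr mulrDr.
rewrite !exprMn.
have em : r ^+ m = r ^+ (m - u) * r ^+ u by rewrite -exprD subnK.
rewrite em; ring.
Qed.

Lemma PX_eval m U (q : rat) : all (fun u => u <= m)%N U -> 0 <= q ->
  (\prod_(u <- U) gp m u).[q / (1 + q)] =
  ((1 + q)^-1) ^+ (m * size U) * (PX m U).[q].
Proof.
move=> hU q0; elim: U hU => [|u U IH] /=.
  by rewrite /PX !big_nil muln0 expr0 mul1r !hornerE.
case/andP=> hu hU; rewrite /PX !big_cons !hornerM -/(PX m U) IH // gp_eval //.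
rewrite !(hornerE, hornerXn) mulnS exprD /=; ring.
Qed.

Lemma poly_eq_nat (P Q : {poly rat}) : (forall i : nat, P.[i%:R] = Q.[i%:R]) -> P = Q.
Proof.
move=> h; apply/eqP; rewrite -subr_eq0; apply/eqP.
apply: (@roots_geq_poly_eq0 _ _ [seq i%:R | i <- iota 0 (size (P - Q))]).
- by apply/allP=> x /mapP [i _ ->]; rewrite /root hornerD hornerN h subrr.
- rewrite map_inj_uniq ?iota_uniq // => i j /eqP; rewrite eqr_nat => /eqP //.
- by rewrite size_map size_iota.
Qed.

Lemma PX_split m U : all (fun u => 2 * u <= m)%N U ->
  PX m U = 'X^(sumn U) * QP [seq (m - 2 * u)%N | u <- U].
Proof.
elim: U => [|u U IH] /=; first by rewrite /PX /QP !big_nil expr0 mulr1.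
case/andP=> hu hU; rewrite /PX /QP !big_cons -/(PX m U) -/(QP _) IH //.
have e : (m - u = u + (m - 2 * u))%N by lia.
rewrite e exprD exprD; ring.
Qed.

Lemma Xn_cancel (a b : nat) (P Q : {poly rat}) : P`_0 != 0 -> Q`_0 != 0 ->
  'X^a * P = 'X^b * Q -> (a = b) /\ P = Q.
Proof.
move=> P0 Q0.
wlog ab : a b P Q P0 Q0 / (a <= b)%N.
  move=> W; case: (leqP a b) => h; first exact: W.
  by move=> e; have [-> ->] := W b a Q P Q0 P0 (ltnW h) (esym e).
move=> e.
have ab' : a = b.
  apply/eqP; rewrite eqn_leq ab /=; rewrite leqNgt; apply/negP => hlt.
  have := congr1 (fun p : {poly rat} => p`_a) e; rewrite !coefXnM ltnn hlt subnn => ha.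
  by move: P0; rewrite ha eqxx.
split=> //; subst b; apply: (mulfI _ e).
by rewrite expf_neq0 // polyX_eq0.
Qed.

Lemma gp_inj m U V : all (fun u => 2 * u <= m)%N U -> all (fun u => 2 * u <= m)%N V ->
  size U = size V -> \prod_(u <- U) gp m u = \prod_(v <- V) gp m v -> perm_eq U V.
Proof.
move=> hU hV hs he.
have hU' : all (fun u => u <= m)%N U.
  by apply/allP=> x xU; have := allP hU x xU => /=; lia.
have hV' : all (fun u => u <= m)%N V.
  by apply/allP=> x xU; have := allP hV x xU => /=; lia.
have hP : PX m U = PX m V.
  apply: poly_eq_nat => i.
  have := congr1 (horner^~ (i%:R / (1 + i%:R))) he.
  rewrite !PX_eval ?ler0n // hs; apply: mulfI.
  by rewrite expf_neq0 // invr_eq0; rewrite -(natrD _ 1) pnatr_eq0.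
move: hP; rewrite !PX_split // => /Xn_cancel [].
- by rewrite QP_coef0 pnatr_eq0 expn_eq0.
- by rewrite QP_coef0 pnatr_eq0 expn_eq0.
move=> _ /QP_inj hp.
have eU : forall W, all (fun u => 2 * u <= m)%N W ->
    map (fun d => ((m - d) %/ 2)%N) [seq (m - 2 * u)%N | u <- W] = W.
  move=> W hW; rewrite -map_comp; transitivity (map id W); last exact: map_id.
  by apply/eq_in_map => x /(allP hW) /= hx; lia.
by have := perm_map (fun d => ((m - d) %/ 2)%N) hp; rewrite !eU.
Qed.

Lemma card_lt m c : (c <= m)%N -> #|[pred b : 'I_m | (b < c)%N]| = c.
Proof.
move=> cm; rewrite -sum1_card.
have -> : \sum_(i in [pred b : 'I_m | (b < c)%N]) 1%N = \sum_(i < m | true && (i < c)%N) 1%N.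
  by apply: eq_bigl => i; rewrite inE.
by rewrite (big_ord_narrow_cond cm) sum1_card card_ord.
Qed.

Lemma gp_sym m u : (u <= m)%N -> gp m (m - u) = gp m u.
Proof. by move=> um; rewrite /gp subKn // addrC [X in _ + X]mulrC [X in X + _]mulrC. Qed.

Lemma w_le s k y t : (@w s k y t <= 2 ^ s)%N.
Proof. by apply: leq_trans (max_card _) _; rewrite card_ord. Qed.

Lemma main_count s' k :
  nc (s'.+1 + k) (2 ^ (s'.+1 + k) - 2 ^ k) = 'C(2 ^ k + 2 ^ s', 2 ^ k).
Proof.
set a := (2 ^ k)%N; set h := (2 ^ s')%N; set m := (2 ^ s'.+1)%N.
have mh : m = (2 * h)%N by rewrite /m expnS.
set K : rat := ((2 ^ (2 ^ (s'.+1 + k) - 1))%:R)^-1.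
set ST := [set t : a.-tuple 'I_h.+1 | sorted leq (map val t)].
pose hv (t : a.-tuple 'I_h.+1) := \prod_(u <- map val t) gp m u.
have WE y : Wsplit (s'.+1 + k) (2 ^ (s'.+1 + k) - 2 ^ k) y = K *: \prod_t gp m (w y t).
  by rewrite /Wsplit sum_formula.
have C1 (y : 'rV['F_2]_(2 ^ (s'.+1 + k))) :
    exists2 tu, tu \in ST & \prod_t gp m (@w s'.+1 k y t) = hv tu.
  pose u t := minn (@w s'.+1 k y t) (m - @w s'.+1 k y t).
  have uh t : (u t < h.+1)%N.
    have := @w_le s'.+1 k y t; rewrite -/m mh /u; lia.
  pose tu0 := map_tuple (fun t => inord (u t) : 'I_h.+1) (ord_tuple a).
  exists (sort_tuple (fun x y : 'I_h.+1 => (x <= y)%N) tu0).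
    rewrite inE /= sorted_map; apply: sort_sorted => x1 x2; exact: leq_total.
  rewrite /hv /= big_map (perm_big _ (permEl (perm_sort _ _))) /= big_map big_enum /=.
  apply: eq_big => [t|t _] //; rewrite inordK // /u.
  case: (leqP (@w s'.+1 k y t) (m - @w s'.+1 k y t)) => hle.
    by [].
  by rewrite gp_sym // w_le.
have C2 tu : tu \in ST ->
    exists y : 'rV['F_2]_(2 ^ (s'.+1 + k)), \prod_t gp m (@w s'.+1 k y t) = hv tu.
  move=> _.
  exists (\row_j (if (j %/ a < tnth tu (jmod k j))%N then 1 else 0 : 'F_2)).
  rewrite /hv big_map big_tuple; apply: eq_bigr => t _; congr gp.
  rewrite /w; transitivity #|[pred b : 'I_(2 ^ s'.+1) | (b < tnth tu t)%N]|; last first.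
    by apply: card_lt; have := ltn_ord (tnth tu t); rewrite -/m mh; lia.
  apply: eq_card => b; rewrite !inE mxE jmod_idx /=.
  rewrite divnMDl ?expn_gt0 // divn_small // addn0.
  by case: (_ < _)%N.
have C3 : {in ST &, injective hv}.
  move=> t1 t2; rewrite !inE => s1 s2 e.
  have hall : forall tu : a.-tuple 'I_h.+1, all (fun u => 2 * u <= m)%N (map val tu).
    by move=> tu; apply/allP => x /mapP [u _ ->]; have := ltn_ord u; rewrite /= mh; lia.
  have := gp_inj (hall t1) (hall t2) _ e; rewrite !size_map !size_tuple => /(_ erefl) p.
  have := sorted_eq leq_trans anti_leq s1 s2 p.
  by move/(inj_map val_inj) => e'; apply: val_inj.
have K0 : K != 0 by rewrite invr_eq0 pnatr_eq0 expn_eq0.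
have Kinj : injective (fun p : {poly rat} => K *: p).
  by move=> p1 p2 /(congr1 (fun p => K^-1 *: p)); rewrite !scalerA mulVf // !scale1r.
rewrite /nc.
have pe : perm_eq (undup [seq Wsplit (s'.+1 + k) (2 ^ (s'.+1 + k) - 2 ^ k) y
                         | y <- enum 'rV['F_2]_(2 ^ (s'.+1 + k))])
                  [seq K *: hv t | t <- enum ST].
  apply: uniq_perm; first exact: undup_uniq.
    rewrite map_inj_in_uniq ?enum_uniq // => x1 x2; rewrite !mem_enum => h1 h2.
    by move/Kinj; apply: C3.
  move=> p; rewrite mem_undup; apply/mapP/mapP => [[y _ ->]|[t]].
    by have [t tS e] := C1 y; exists t; rewrite ?mem_enum // WE e.
  rewrite mem_enum => /C2 [y e] ->; exists y; first by rewrite mem_enum.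
  by rewrite WE e.
rewrite (perm_size pe) size_map -cardE card_sorted_tuples.
done.
Qed.

Local Close Scope ring_scope.

Theorem corollary6 (n a : nat) :
  (exists k : nat, a = 2 ^ k) ->
  a <= 2 ^ n %/ 2 ->
  nc n (2 ^ n - a) = 'C(a + 2 ^ n %/ (2 * a), 2 ^ n %/ (2 * a)).
Proof.
move=> [k ->] ha.
have kn : (k < n)%N.
  rewrite -(ltn_exp2l _ _ (isT : (1 < 2)%N)); apply: leq_ltn_trans ha _.
  by rewrite ltn_Pdiv // expn_gt0.
have en : n = ((n - k.+1).+1 + k)%N by lia.
move: ha; rewrite en; set s' := (n - k.+1)%N => _.
have ed : (2 ^ (s'.+1 + k) %/ (2 * 2 ^ k) = 2 ^ s')%N.
  by rewrite expnD expnS -mulnA mulnCA mulnK // muln_gt0 expn_gt0.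
rewrite ed main_count.
by rewrite -{3}(addKn (2 ^ k) (2 ^ s')) bin_sub // leq_addr.
Qed.
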